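(* The irreducible polynomials over the tropical hyperfield $\mathbb T$ are precisely the polynomials of degree $1$, and the set of polynomials over $\mathbb T$ has the unique factorization property.
   Context: The tropical hyperfield $\mathbb T$ is the set $\mathbb R_{\ge0}$ with usual multiplication and hyperaddition $a\boxplus b=\{\max\{a,b\}\}$ if $a\ne b$ and $a\boxplus a=[0,a]$; equivalently $c\in a\boxplus b$ iff the maximum of $a,b,c$ is attained at least twice. Here $-a=a$. Iterated sums: $\boxplus_{i=1}^n a_i=\bigcup_{b\in\boxplus_{i=1}^{n-1}a_i} b\boxplus a_n$. A polynomial over $\mathbb T$ is a finitely supported sequence $(c_i)$ in $\mathbb T$, written $\sum c_iT^i$, with degree the largest $k$ with $c_k\ne0$. Hyperproduct: $p\boxdot q=\{\sum e_iT^i : e_i\in \boxplus_{k+l=i} c_kd_l\}$ for $p=\sum c_iT^i,q=\sum d_iT^i$, and $\boxdot_{i=1}^n q_i=\bigcup_{r\in\boxdot_{i=1}^{n-1}q_i} r\boxdot q_n$. $p\sim q$ means $p\in a\boxdot q$ for some $a\neq0$. $p$ is irreducible if $\deg p\ge1$ and $p\in q_1\boxdot q_2$ implies $p\sim q_1$ or $p\sim q_2$. The unique factorization property: whenever $p\in q_1\boxdot\cdots\boxdot q_n$ and $p\in q'_1\boxdot\cdots\boxdot q'_m$ with all factors irreducible, then $n=m$ and $q_i\sim q'_{\sigma(i)}$ for some permutation $\sigma$. *)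

(* Defs.v *)
From Stdlib Require Import Reals List Permutation.
Open Scope R_scope.

Definition inT (a : R) : Prop := 0 <= a.

(* c \in a [+] b  iff  c \in T and the maximum of a, b, c is attained at
   least twice. *)
Definition hadd (a b c : R) : Prop :=
  inT c /\
  ((a = b /\ c <= a) \/ (a = c /\ b <= a) \/ (b = c /\ a <= b)).

Fixpoint hsum (f : nat -> R) (n : nat) (c : R) : Prop :=
  match n with
  | O => c = f O
  | S m => exists b, hsum f m b /\ hadd b (f (S m)) c
  end.

Definition is_poly (p : nat -> R) : Prop :=
  (forall i, inT (p i)) /\ exists N, forall i, (N <= i)%nat -> p i = 0.

Definition has_deg (p : nat -> R) (d : nat) : Prop :=
  p d <> 0 /\ forall k, (d < k)%nat -> p k = 0.

Definition deg_ge1 (p : nat -> R) : Prop :=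
  exists k, (1 <= k)%nat /\ p k <> 0.

Definition hprod (p q r : nat -> R) : Prop :=
  is_poly r /\ forall i, hsum (fun k => p k * q (i - k)%nat) i (r i).

(* Iterated hyperproduct over a list given in REVERSED order:
   hprod_rev [q_n; ...; q_1] r  iff  r \in q_1 [.] ... [.] q_n,
   where [.]_{i=1}^1 = {q_1} and
   [.]_{i=1}^n = U_{s in [.]_{i=1}^{n-1}} s [.] q_n. *)
Fixpoint hprod_rev (qs : list (nat -> R)) (r : nat -> R) : Prop :=
  match qs with
  | nil => False
  | q :: nil => forall i, r i = q i
  | q :: qs' => exists s, hprod_rev qs' s /\ hprod s q r
  end.

Definition hprodn (qs : list (nat -> R)) (r : nat -> R) : Prop :=
  hprod_rev (rev qs) r.

Definition constp (a : R) : nat -> R :=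
  fun i => match i with O => a | S _ => 0 end.

Definition assoc (p q : nat -> R) : Prop :=
  exists a, inT a /\ a <> 0 /\ hprod (constp a) q p.

Definition irreducible (p : nat -> R) : Prop :=
  is_poly p /\ deg_ge1 p /\
  forall q1 q2, is_poly q1 -> is_poly q2 -> hprod q1 q2 p ->
    assoc p q1 \/ assoc p q2.

Definition unique_factorization : Prop :=
  forall (p : nat -> R) (qs qs' : list (nat -> R)),
    is_poly p ->
    qs <> nil -> qs' <> nil ->
    Forall irreducible qs -> Forall irreducible qs' ->
    hprodn qs p -> hprodn qs' p ->
    length qs = length qs' /\
    exists qs'', Permutation qs' qs'' /\ Forall2 assoc qs qs''.

(* Main.v *)
Require Import Defs.
From Stdlib Require Import Reals List Permutation.
From Stdlib Require Import Lra Lia Classical_Prop.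
Open Scope R_scope.

Lemma hadd_le b y c : hadd b y c -> c <= b \/ c <= y.
Proof. unfold hadd; intros [_ H]; lra. Qed.

Lemma hsum_le f n c M : (forall j, (j <= n)%nat -> f j <= M) -> hsum f n c -> c <= M.
Proof.
  revert c; induction n as [|n IH]; simpl; intros c Hf H.
  - subst; apply Hf; lia.
  - destruct H as [b [Hb Ha]]. apply hadd_le in Ha.
    assert (b <= M) by (apply IH; auto; intros; apply Hf; lia).
    assert (f (S n) <= M) by (apply Hf; lia). lra.
Qed.

Lemma hsum_lt f n c M : (forall j, (j <= n)%nat -> f j < M) -> hsum f n c -> c < M.
Proof.
  revert c; induction n as [|n IH]; simpl; intros c Hf H.
  - subst; apply Hf; lia.
  - destruct H as [b [Hb Ha]]. apply hadd_le in Ha.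
    assert (b < M) by (apply IH; auto; intros; apply Hf; lia).
    assert (f (S n) < M) by (apply Hf; lia). lra.
Qed.

Lemma hsum_zero f n c : (forall j, (j <= n)%nat -> f j = 0) -> hsum f n c -> c = 0.
Proof.
  revert c; induction n as [|n IH]; simpl; intros c Hf H.
  - subst; apply Hf; lia.
  - destruct H as [b [Hb Ha]].
    assert (b = 0) by (apply IH; auto; intros; apply Hf; lia).
    assert (f (S n) = 0) by (apply Hf; lia). subst b.
    unfold hadd, inT in Ha. lra.
Qed.

Lemma hsum_unique f n c j : (j <= n)%nat ->
  (forall k, (k <= n)%nat -> k <> j -> f k < f j) -> hsum f n c -> c = f j.
Proof.
  revert c; induction n as [|n IH]; simpl; intros c Hj Hf H.
  - subst; f_equal; lia.
  - destruct H as [b [Hb Ha]]. unfold hadd in Ha.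
    destruct (Nat.eq_dec j (S n)) as [->|Hne].
    + assert (b < f (S n)) by (apply (hsum_lt f n); auto; intros; apply Hf; lia).
      lra.
    + assert (b = f j) by (apply IH; auto; try lia; intros; apply Hf; lia).
      assert (f (S n) < f j) by (apply Hf; lia). lra.
Qed.

Lemma hsum_single f n c j : (j <= n)%nat -> 0 <= f j ->
  (forall k, (k <= n)%nat -> k <> j -> f k = 0) -> hsum f n c -> c = f j.
Proof.
  intros Hj H0 Hf H. destruct (Req_dec_T (f j) 0) as [E|E].
  - rewrite E. apply (hsum_zero f n); auto.
    intros k Hk. destruct (Nat.eq_dec k j); subst; auto.
  - apply (hsum_unique f n); auto. intros k Hk Hkj. rewrite Hf; auto. lra.
Qed.

Lemma hsum_ext0 f m n c : (m <= n)%nat -> 0 <= c ->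
  (forall j, (m < j <= n)%nat -> f j = 0) -> hsum f m c -> hsum f n c.
Proof.
  intros Hmn Hc Hf. induction n as [|n IH]; intros H.
  - replace m with 0%nat in H by lia. auto.
  - destruct (Nat.eq_dec m (S n)) as [<-|Hne]; auto.
    simpl. exists c. split.
    + apply IH; auto; [lia| intros; apply Hf; lia].
    + rewrite (Hf (S n)) by lia. unfold hadd, inT. lra.
Qed.
Definition nneg (p : nat -> R) := forall i, 0 <= p i.

Lemma poly_nonneg p : is_poly p -> nneg p.
Proof. intros [H _] i; apply H. Qed.

Lemma hprod_const_inv a q p : 0 <= a -> nneg q -> hprod (constp a) q p ->
  forall i, p i = a * q i.
Proof.
  intros Ha Hq [_ H] i. specialize (H i).
  apply (hsum_single _ i _ 0) in H; [| lia | simpl; rewrite Nat.sub_0_r; apply Rmult_le_pos; auto |].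
  - rewrite H; simpl; rewrite Nat.sub_0_r; auto.
  - intros [|k] _ Hk; [lia|]. simpl; lra.
Qed.

Lemma hprod_const a q p : 0 <= a -> is_poly p -> (forall i, p i = a * q i) ->
  hprod (constp a) q p.
Proof.
  intros Ha Hp Hpq. split; auto. intro i.
  apply (hsum_ext0 _ 0); [lia| apply (poly_nonneg p Hp) | |].
  - intros [|j] Hj; [lia|]. simpl; lra.
  - simpl. rewrite Nat.sub_0_r; auto.
Qed.

Lemma deg_unique p d1 d2 : has_deg p d1 -> has_deg p d2 -> d1 = d2.
Proof.
  intros [H1 H1'] [H2 H2']. destruct (Nat.lt_total d1 d2) as [h|[h|h]]; auto.
  - exfalso; apply H2; auto.
  - exfalso; apply H1; auto.
Qed.

Lemma deg_exists p : is_poly p -> (exists k, p k <> 0) -> exists d, has_deg p d.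
Proof.
  intros [_ [N HN]]. revert HN. induction N as [|N IH]; intros HN [k Hk].
  - exfalso; apply Hk, HN; lia.
  - destruct (Req_dec_T (p N) 0) as [E|E].
    + apply IH. 2: exists k; auto.
      intros i Hi. destruct (Nat.eq_dec i N); subst; auto. apply HN; lia.
    + exists N; split; [auto|]. intros; apply HN; lia.
Qed.

Lemma deg_ge p d k : has_deg p d -> p k <> 0 -> (k <= d)%nat.
Proof. intros [_ H] Hk. destruct (Compare_dec.le_lt_dec k d); auto. exfalso; apply Hk, H; auto. Qed.

Lemma hprod_deg s q r d1 d2 : nneg s -> nneg q -> has_deg s d1 -> has_deg q d2 ->
  hprod s q r -> has_deg r (d1 + d2).
Proof.
  intros Hs Hq [Hs1 Hs2] [Hq1 Hq2] [_ H]. split.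
  - specialize (H (d1 + d2)%nat).
    apply (hsum_single _ _ _ d1) in H.
    + rewrite H. replace (d1 + d2 - d1)%nat with d2 by lia.
      intro E; apply Rmult_integral in E; tauto.
    + lia.
    + apply Rmult_le_pos; auto.
    + intros k Hk Hkd. destruct (Nat.lt_total k d1) as [h|[h|h]]; try lia.
      * rewrite Hq2 by lia; ring.
      * rewrite Hs2 by lia; ring.
  - intros k Hk. specialize (H k). eapply hsum_zero; [|exact H].
    intros j Hj. destruct (Compare_dec.le_lt_dec j d1).
    + rewrite Hq2 by lia; ring.
    + rewrite Hs2 by lia; ring.
Qed.
Definition maxidx (p : nat -> R) x k :=
  0 < p k * x ^ k /\ (forall j, p j * x ^ j <= p k * x ^ k) /\
  (forall j, (k < j)%nat -> p j * x ^ j < p k * x ^ k).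
Definition minidx (p : nat -> R) x k :=
  0 < p k * x ^ k /\ (forall j, p j * x ^ j <= p k * x ^ k) /\
  (forall j, (j < k)%nat -> p j * x ^ j < p k * x ^ k).

Lemma maxidx_unique p x k1 k2 : maxidx p x k1 -> maxidx p x k2 -> k1 = k2.
Proof.
  intros [_ [A1 B1]] [_ [A2 B2]]. destruct (Nat.lt_total k1 k2) as [h|[h|h]]; auto.
  - specialize (B1 _ h); specialize (A2 k1); lra.
  - specialize (B2 _ h); specialize (A1 k2); lra.
Qed.
Lemma minidx_unique p x k1 k2 : minidx p x k1 -> minidx p x k2 -> k1 = k2.
Proof.
  intros [_ [A1 B1]] [_ [A2 B2]]. destruct (Nat.lt_total k1 k2) as [h|[h|h]]; auto.
  - specialize (B2 _ h); specialize (A1 k2); lra.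
  - specialize (B1 _ h); specialize (A2 k1); lra.
Qed.

Lemma term_scale (s q : nat -> R) x i j : (j <= i)%nat ->
  s j * q (i - j)%nat * x ^ i = (s j * x ^ j) * (q (i - j)%nat * x ^ (i - j)).
Proof.
  intros H. replace (x ^ i) with (x ^ j * x ^ (i - j)).
  - ring.
  - rewrite <- pow_add. f_equal. lia.
Qed.

Lemma prod_le s q r x i V : 0 < x -> hprod s q r ->
  (forall j, (j <= i)%nat -> (s j * x ^ j) * (q (i - j)%nat * x ^ (i - j)) <= V) ->
  r i * x ^ i <= V.
Proof.
  intros Hx [_ H] Hf. assert (Hp : 0 < x ^ i) by (apply pow_lt; auto).
  assert (r i <= V / x ^ i).
  { apply (hsum_le (fun k => s k * q (i - k)%nat) i); [| apply H]. intros j Hj.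
    apply (Rmult_le_reg_r (x ^ i)); auto. replace (V / x ^ i * x ^ i) with V by (field; lra).
    rewrite term_scale by auto. auto. }
  apply (Rmult_le_compat_r (x ^ i)) in H0; [|lra].
  replace (V / x ^ i * x ^ i) with V in H0 by (field; lra). auto.
Qed.

Lemma prod_lt s q r x i V : 0 < x -> hprod s q r ->
  (forall j, (j <= i)%nat -> (s j * x ^ j) * (q (i - j)%nat * x ^ (i - j)) < V) ->
  r i * x ^ i < V.
Proof.
  intros Hx [_ H] Hf. assert (Hp : 0 < x ^ i) by (apply pow_lt; auto).
  assert (r i < V / x ^ i).
  { apply (hsum_lt (fun k => s k * q (i - k)%nat) i); [| apply H]. intros j Hj.
    apply (Rmult_lt_reg_r (x ^ i)); auto. replace (V / x ^ i * x ^ i) with V by (field; lra).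
    rewrite term_scale by auto. auto. }
  apply (Rmult_lt_compat_r (x ^ i)) in H0; [|lra].
  replace (V / x ^ i * x ^ i) with V in H0 by (field; lra). auto.
Qed.

Lemma prod_eq s q r x j0 l0 : 0 < x -> hprod s q r ->
  (forall j, (j <= j0 + l0)%nat -> j <> j0 ->
     (s j * x ^ j) * (q (j0 + l0 - j)%nat * x ^ (j0 + l0 - j)) <
     (s j0 * x ^ j0) * (q l0 * x ^ l0)) ->
  r (j0 + l0)%nat = s j0 * q l0.
Proof.
  intros Hx [_ H] Hf. specialize (H (j0 + l0)%nat).
  assert (Hp : 0 < x ^ (j0 + l0)) by (apply pow_lt; auto).
  apply (hsum_unique _ _ _ j0) in H; [| lia |].
  - rewrite H. f_equal. f_equal. lia.
  - intros k Hk Hkj. apply (Rmult_lt_reg_r (x ^ (j0 + l0))); auto.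
    rewrite !term_scale by lia. replace (j0 + l0 - j0)%nat with l0 by lia. auto.
Qed.

Lemma mul_lt_l a b S Q : 0 <= a -> 0 <= b -> a < S -> b <= Q -> 0 < Q -> a * b < S * Q.
Proof. intros; nra. Qed.
Lemma mul_lt_r a b S Q : 0 <= a -> 0 <= b -> a <= S -> b < Q -> 0 < S -> a * b < S * Q.
Proof. intros; nra. Qed.
Lemma mul_le a b S Q : 0 <= a -> 0 <= b -> a <= S -> b <= Q -> a * b <= S * Q.
Proof. intros; nra. Qed.

Lemma nn_term p x j : nneg p -> 0 < x -> 0 <= p j * x ^ j.
Proof. intros H Hx. apply Rmult_le_pos; auto. apply pow_le; lra. Qed.

Lemma pos_of (a b : R) : 0 < a * b -> 0 <= a -> 0 <= b -> 0 < a /\ 0 < b.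
Proof. intros; split; nra. Qed.

Lemma hprod_maxidx s q r x j0 l0 : 0 < x -> nneg s -> nneg q -> hprod s q r ->
  maxidx s x j0 -> maxidx q x l0 -> maxidx r x (j0 + l0).
Proof.
  intros Hx Hs Hq Hr [Sp [Sa Sb]] [Qp [Qa Qb]].
  assert (Hss := nn_term s x j0 Hs Hx). assert (Hqq := nn_term q x l0 Hq Hx).
  assert (E : r (j0 + l0)%nat * x ^ (j0 + l0) = (s j0 * x ^ j0) * (q l0 * x ^ l0)).
  { rewrite (prod_eq s q r x j0 l0); auto.
    - rewrite pow_add; ring.
    - intros j Hj Hne. destruct (Nat.lt_total j j0) as [h|[h|h]]; [|lia|].
      + apply mul_lt_r; try (apply Qb; lia); try (apply Sb; lia); auto using nn_term.
      + apply mul_lt_l; try (apply Qb; lia); try (apply Sb; lia); auto using nn_term. }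
  unfold maxidx, minidx; rewrite E. split; [|split].
  - apply Rmult_lt_0_compat; auto.
  - intro i. apply (prod_le s q r); auto. intros j Hj. apply mul_le; auto using nn_term.
  - intros i Hi. apply (prod_lt s q r); auto. intros j Hj.
    destruct (Compare_dec.le_lt_dec j j0).
    + apply mul_lt_r; try (apply Qb; lia); try (apply Sb; lia); auto using nn_term.
    + apply mul_lt_l; try (apply Qb; lia); try (apply Sb; lia); auto using nn_term.
Qed.

Lemma hprod_minidx s q r x j0 l0 : 0 < x -> nneg s -> nneg q -> hprod s q r ->
  minidx s x j0 -> minidx q x l0 -> minidx r x (j0 + l0).
Proof.
  intros Hx Hs Hq Hr [Sp [Sa Sb]] [Qp [Qa Qb]].
  assert (Hss := nn_term s x j0 Hs Hx). assert (Hqq := nn_term q x l0 Hq Hx).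
  assert (E : r (j0 + l0)%nat * x ^ (j0 + l0) = (s j0 * x ^ j0) * (q l0 * x ^ l0)).
  { rewrite (prod_eq s q r x j0 l0); auto.
    - rewrite pow_add; ring.
    - intros j Hj Hne. destruct (Nat.lt_total j j0) as [h|[h|h]]; [|lia|].
      + apply mul_lt_l; try (apply Qb; lia); try (apply Sb; lia); auto using nn_term.
      + apply mul_lt_r; try (apply Qb; lia); try (apply Sb; lia); auto using nn_term. }
  unfold maxidx, minidx; rewrite E. split; [|split].
  - apply Rmult_lt_0_compat; auto.
  - intro i. apply (prod_le s q r); auto. intros j Hj. apply mul_le; auto using nn_term.
  - intros i Hi. apply (prod_lt s q r); auto. intros j Hj.
    destruct (Compare_dec.le_lt_dec j0 j).
    + apply mul_lt_r; try (apply Qb; lia); try (apply Sb; lia); auto using nn_term.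
    + apply mul_lt_l; try (apply Qb; lia); try (apply Sb; lia); auto using nn_term.
Qed.

Definition lowidx (p : nat -> R) k := p k <> 0 /\ forall j, (j < k)%nat -> p j = 0.

Lemma lowidx_unique p k1 k2 : lowidx p k1 -> lowidx p k2 -> k1 = k2.
Proof.
  intros [A1 B1] [A2 B2]. destruct (Nat.lt_total k1 k2) as [h|[h|h]]; auto.
  - exfalso; apply A1; auto.
  - exfalso; apply A2; auto.
Qed.

Lemma hprod_lowidx s q r j0 l0 : nneg s -> nneg q -> hprod s q r ->
  lowidx s j0 -> lowidx q l0 -> lowidx r (j0 + l0).
Proof.
  intros Hs Hq [_ H] [S1 S2] [Q1 Q2]. split.
  - specialize (H (j0 + l0)%nat). apply (hsum_single _ _ _ j0) in H.
    + rewrite H. replace (j0 + l0 - j0)%nat with l0 by lia.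
      intro E; apply Rmult_integral in E; tauto.
    + lia.
    + apply Rmult_le_pos; auto.
    + intros k Hk Hkd. destruct (Nat.lt_total k j0) as [h|[h|h]]; try lia.
      * rewrite S2 by lia; ring.
      * rewrite Q2 by lia; ring.
  - intros k Hk. specialize (H k). eapply hsum_zero; [|exact H].
    intros j Hj. destruct (Compare_dec.le_lt_dec j0 j).
    + rewrite Q2 by lia; ring.
    + rewrite S2 by lia; ring.
Qed.
Definition lin (q : nat -> R) := is_poly q /\ has_deg q 1.

Definition cle x (q : nat -> R) : nat := if Rle_dec (q 0%nat) (x * q 1%nat) then 1%nat else 0%nat.
Definition clt x (q : nat -> R) : nat := if Rlt_dec (q 0%nat) (x * q 1%nat) then 1%nat else 0%nat.
Definition ceq x (q : nat -> R) : nat := if Req_dec_T (q 0%nat) (x * q 1%nat) then 1%nat else 0%nat.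
Definition ce0 (q : nat -> R) : nat := if Req_dec_T (q 0%nat) 0 then 1%nat else 0%nat.

Fixpoint cnt {A} (f : A -> nat) (l : list A) : nat :=
  match l with nil => 0%nat | a :: l' => (f a + cnt f l')%nat end.

Lemma cnt_app {A} (f : A -> nat) l1 l2 : cnt f (l1 ++ l2) = (cnt f l1 + cnt f l2)%nat.
Proof. induction l1; simpl; auto. rewrite IHl1; lia. Qed.
Lemma cnt_rev {A} (f : A -> nat) l : cnt f (rev l) = cnt f l.
Proof. induction l; simpl; auto. rewrite cnt_app; simpl; lia. Qed.
Lemma cnt_ext {A} (f g : A -> nat) l : (forall a, f a = g a) -> cnt f l = cnt g l.
Proof. intros H; induction l; simpl; auto. Qed.
Lemma cnt_plus {A} (f g : A -> nat) l : cnt (fun a => f a + g a)%nat l = (cnt f l + cnt g l)%nat.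
Proof. induction l; simpl; auto. lia. Qed.

Lemma lin_facts q : lin q -> nneg q /\ 0 < q 1%nat /\ forall k, (2 <= k)%nat -> q k = 0.
Proof.
  intros [Hp [H1 H2]]. assert (Hn := poly_nonneg q Hp). split; auto. split.
  - specialize (Hn 1%nat); lra.
  - intros; apply H2; lia.
Qed.

Lemma lin_maxidx q x : lin q -> 0 < x -> maxidx q x (cle x q).
Proof.
  intros Hl Hx. destruct (lin_facts q Hl) as [Hn [H1 H2]].
  assert (H0 := Hn 0%nat). assert (P : 0 < x * q 1%nat) by (apply Rmult_lt_0_compat; auto).
  unfold cle, maxidx.
  destruct (Rle_dec (q 0%nat) (x * q 1%nat)) as [h|h]; simpl; rewrite ?Rmult_1_r.
  - split; [|split].
    + rewrite Rmult_comm; auto.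
    + intros [|[|j]]; simpl; rewrite ?Rmult_1_r.
      * lra.
      * lra.
      * rewrite H2 by lia. rewrite Rmult_0_l. lra.
    + intros [|[|j]] Hj; try lia. rewrite H2 by lia. rewrite Rmult_0_l. lra.
  - split; [|split].
    + lra.
    + intros [|[|j]]; simpl; rewrite ?Rmult_1_r.
      * lra.
      * lra.
      * rewrite H2 by lia. rewrite Rmult_0_l. lra.
    + intros [|[|j]] Hj; try lia; simpl; rewrite ?Rmult_1_r.
      * lra.
      * rewrite H2 by lia. rewrite Rmult_0_l. lra.
Qed.

Lemma lin_minidx q x : lin q -> 0 < x -> minidx q x (clt x q).
Proof.
  intros Hl Hx. destruct (lin_facts q Hl) as [Hn [H1 H2]].
  assert (H0 := Hn 0%nat). assert (P : 0 < x * q 1%nat) by (apply Rmult_lt_0_compat; auto).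
  unfold clt, minidx.
  destruct (Rlt_dec (q 0%nat) (x * q 1%nat)) as [h|h]; simpl; rewrite ?Rmult_1_r.
  - split; [|split].
    + rewrite Rmult_comm; auto.
    + intros [|[|j]]; simpl; rewrite ?Rmult_1_r.
      * lra.
      * lra.
      * rewrite H2 by lia. rewrite Rmult_0_l. lra.
    + intros [|[|j]] Hj; try lia. simpl; lra.
  - split; [|split].
    + lra.
    + intros [|[|j]]; simpl; rewrite ?Rmult_1_r.
      * lra.
      * lra.
      * rewrite H2 by lia. rewrite Rmult_0_l. lra.
    + intros j Hj; lia.
Qed.

Lemma lin_lowidx q : lin q -> lowidx q (ce0 q).
Proof.
  intros Hl. destruct (lin_facts q Hl) as [Hn [H1 H2]]. unfold ce0, lowidx.
  destruct (Req_dec_T (q 0%nat) 0); split; auto; try lra.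
  - intros j Hj; replace j with 0%nat by lia; auto.
  - intros; lia.
Qed.

Lemma maxidx_ext p p' x k : (forall i, p' i = p i) -> maxidx p x k -> maxidx p' x k.
Proof. intros E [A [B C]]. unfold maxidx; rewrite !E. split; [|split]; intros; rewrite ?E; auto. Qed.
Lemma minidx_ext p p' x k : (forall i, p' i = p i) -> minidx p x k -> minidx p' x k.
Proof. intros E [A [B C]]. unfold minidx; rewrite !E. split; [|split]; intros; rewrite ?E; auto. Qed.
Lemma lowidx_ext p p' k : (forall i, p' i = p i) -> lowidx p k -> lowidx p' k.
Proof. intros E [A B]. unfold lowidx; rewrite !E. split; intros; rewrite ?E; auto. Qed.

Lemma iter_inv l r x : 0 < x -> hprod_rev l r -> Forall lin l ->
  is_poly r /\ maxidx r x (cnt (cle x) l) /\ minidx r x (cnt (clt x) l) /\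
  lowidx r (cnt ce0 l).
Proof.
  intros Hx. revert r. induction l as [|q l IH]; intros r H Hf; [destruct H|].
  inversion Hf as [|? ? Hq Hl]; subst.
  destruct l as [|a l'].
  - simpl in H. assert (Hp : is_poly r).
    { destruct Hq as [[P1 [N P2]] _]. split; [intro i; rewrite H; auto|].
      exists N; intros; rewrite H; auto. }
    simpl cnt; rewrite !Nat.add_0_r. split; [|split; [|split]]; auto.
    + apply (maxidx_ext q); auto. apply lin_maxidx; auto.
    + apply (minidx_ext q); auto. apply lin_minidx; auto.
    + apply (lowidx_ext q); auto. apply lin_lowidx; auto.
  - destruct H as [s [Hs Hsq]]. destruct (IH s Hs Hl) as [Ps [M1 [M2 M3]]].
    assert (Hnq := poly_nonneg q (proj1 Hq)). assert (Hns := poly_nonneg s Ps).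
    split; [apply Hsq|].
    replace (cnt (cle x) (q :: a :: l')) with (cnt (cle x) (a :: l') + cle x q)%nat by (simpl; lia).
    replace (cnt (clt x) (q :: a :: l')) with (cnt (clt x) (a :: l') + clt x q)%nat by (simpl; lia).
    replace (cnt ce0 (q :: a :: l')) with (cnt ce0 (a :: l') + ce0 q)%nat by (simpl; lia).
    split; [|split].
    + apply (hprod_maxidx s q r); auto. apply lin_maxidx; auto.
    + apply (hprod_minidx s q r); auto. apply lin_minidx; auto.
    + apply (hprod_lowidx s q r); auto. apply lin_lowidx; auto.
Qed.

Fixpoint Mf (p : nat -> R) (c : R) (n k : nat) : R :=
  match n with O => 0 | S n' => Rmax (p (S k)) (c * Mf p c n' (S k)) end.

Lemma Rmax_formula a b : Rmax a b = (a + b + Rabs (a - b)) / 2.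
Proof. unfold Rmax, Rabs. destruct Rle_dec; destruct Rcase_abs; lra. Qed.

Lemma cont_max f g : continuity f -> continuity g -> continuity (fun c => Rmax (f c) (g c)).
Proof.
  intros Hf Hg x.
  apply continuity_pt_locally_ext with (f := fun c => (f c + g c + Rabs (f c - g c)) / 2) (a := 1).
  - lra.
  - intros; symmetry; apply Rmax_formula.
  - change (fun c => (f c + g c + Rabs (f c - g c)) / 2) with
      (mult_fct (plus_fct (plus_fct f g) (comp Rabs (minus_fct f g))) (fct_cte (/2))).
    apply continuity_mult; [|apply continuity_const; intros ? ?; reflexivity].
    apply continuity_plus; [apply continuity_plus; auto|].
    apply continuity_comp; [apply continuity_minus; auto| apply Rcontinuity_abs].
Qed.

Lemma cont_Mf p n : forall k, continuity (fun c => Mf p c n k).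
Proof.
  induction n as [|n IH]; intro k; simpl.
  - apply continuity_const; intros ? ?; reflexivity.
  - apply cont_max; [apply continuity_const; intros ? ?; reflexivity|].
    change (fun c => c * Mf p c n (S k)) with (mult_fct id (fun c => Mf p c n (S k))).
    apply continuity_mult; auto. apply derivable_continuous, derivable_id.
Qed.

Lemma Mf_nn p c n : forall k, nneg p -> 0 <= c -> 0 <= Mf p c n k.
Proof.
  induction n as [|n IH]; intros k Hp Hc; simpl; [lra|].
  apply Rle_trans with (p (S k)); [apply Hp| apply Rmax_l].
Qed.

Lemma Mf_lb p c m : forall k, nneg p -> 0 <= c -> c ^ m * p (k + 1 + m)%nat <= Mf p c (S m) k.
Proof.
  induction m as [|m IH]; intros k Hp Hc.
  - simpl. replace (k + 1 + 0)%nat with (S k) by lia. rewrite Rmult_1_l. apply Rmax_l.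
  - change (Mf p c (S (S m)) k) with (Rmax (p (S k)) (c * Mf p c (S m) (S k))).
    eapply Rle_trans; [|apply Rmax_r]. simpl.
    replace (k + 1 + S m)%nat with (S k + 1 + m)%nat by lia.
    rewrite Rmult_assoc. apply Rmult_le_compat_l; auto.
Qed.

Lemma root_exists p d : is_poly p -> has_deg p d -> (1 <= d)%nat ->
  exists c, 0 <= c /\ c * Mf p c d 0 = p 0%nat.
Proof.
  intros Hp [Hd1 Hd2] Hd. assert (Hn := poly_nonneg p Hp).
  assert (Pd : 0 < p d) by (specialize (Hn d); lra).
  destruct (Req_dec_T (p 0%nat) 0) as [E|E].
  - exists 0; split; [lra|]. rewrite E; ring.
  - assert (P0 : 0 < p 0%nat) by (specialize (Hn 0%nat); lra).
    set (y := p 0%nat / p d + 1).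
    assert (Hy : 1 <= y) by (unfold y; assert (0 <= p 0%nat / p d) by (apply Rmult_le_pos; [lra| apply Rlt_le, Rinv_0_lt_compat; auto]); lra).
    destruct (IVT (fun c => c * Mf p c d 0 - p 0%nat) 0 y) as [z [Hz Ez]].
    + apply continuity_minus; [|apply continuity_const; intros ? ?; reflexivity].
      change (fun c => c * Mf p c d 0) with (mult_fct id (fun c => Mf p c d 0)).
      apply continuity_mult; [apply derivable_continuous, derivable_id| apply cont_Mf].
    + lra.
    + simpl. lra.
    + simpl. destruct d as [|d']; [lia|].
      assert (B := Mf_lb p y d' 0 Hn ltac:(lra)). replace (0 + 1 + d')%nat with (S d') in B by lia.
      assert (B2 : 1 <= y ^ d') by (apply pow_R1_Rle; auto).
      assert (B3 : y * p (S d') = p 0%nat + p (S d')) by (unfold y; field; intro; lra).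
      nra.
    + exists z. split; [lra|]. lra.
Qed.

Lemma factor p d : is_poly p -> has_deg p d -> (1 <= d)%nat ->
  exists L q, is_poly L /\ has_deg L 1 /\ is_poly q /\ has_deg q (d - 1) /\ hprod L q p.
Proof.
  intros Hp Hdeg Hd. destruct (root_exists p d Hp Hdeg Hd) as [c [Hc Ec]].
  assert (Hn := poly_nonneg p Hp). destruct Hdeg as [Hd1 Hd2].
  set (L := fun i : nat => match i with O => c | 1%nat => 1 | _ => 0 end).
  set (q := fun k => Mf p c (d - k) k).
  assert (Qrec : forall k, (k < d)%nat -> q k = Rmax (p (S k)) (c * q (S k))).
  { intros k Hk. unfold q. replace (d - k)%nat with (S (d - S k)) by lia. reflexivity. }
  assert (Qz : forall k, (d <= k)%nat -> q k = 0).
  { intros k Hk. unfold q. replace (d - k)%nat with 0%nat by lia. reflexivity. }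
  assert (Qn : forall k, 0 <= q k) by (intro k; apply Mf_nn; auto).
  exists L, q. split; [|split; [|split; [|split]]].
  - split; [intros [|[|i]]; unfold L, inT; simpl; lra|]. exists 2%nat; intros [|[|i]] Hi; try lia; auto.
  - split; [unfold L; simpl; lra|]. intros [|[|k]] Hk; try lia; auto.
  - split; [exact Qn|]. exists d; auto.
  - split.
    + rewrite Qrec by lia. replace (S (d - 1)) with d by lia. rewrite Qz by lia.
      rewrite Rmult_0_r, Rmax_left by (apply Hn). auto.
    + intros k Hk; apply Qz; lia.
  - split; auto. intros [|k].
    + simpl. unfold q. rewrite Nat.sub_0_r. symmetry; exact Ec.
    + apply (hsum_ext0 _ 1); [lia| apply Hn | |].
      * intros [|[|j]] Hj; try lia. simpl. ring.
      * simpl. exists (c * q (S k - 0)%nat). split; [reflexivity|].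
        replace (S k - 0)%nat with (S k) by lia. replace (k - 0)%nat with k by lia.
        rewrite Rmult_1_l. unfold hadd. split; [apply Hn|].
        destruct (Compare_dec.le_lt_dec d k) as [h|h].
        -- rewrite (Qz k), (Qz (S k)), (Hd2 (S k)) by lia. lra.
        -- rewrite (Qrec k h). unfold Rmax. destruct Rle_dec; lra.
Qed.

Lemma cnt_split {A} (f : A -> nat) l : (0 < cnt f l)%nat ->
  exists l1 y l2, l = l1 ++ y :: l2 /\ f y <> 0%nat.
Proof.
  induction l as [|a l IH]; simpl; intros H; [lia|].
  destruct (Nat.eq_dec (f a) 0) as [E|E].
  - destruct IH as [l1 [y [l2 [-> Hy]]]]; [lia|]. exists (a :: l1), y, l2; auto.
  - exists nil, a, l; auto.
Qed.

Lemma lin_assoc q q' x : lin q -> lin q' -> q 0%nat = x * q 1%nat -> q' 0%nat = x * q' 1%nat ->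
  assoc q q'.
Proof.
  intros Hq Hq' E E'. destruct (lin_facts q Hq) as [Hn [H1 H2]].
  destruct (lin_facts q' Hq') as [Hn' [H1' H2']].
  exists (q 1%nat / q' 1%nat). split; [|split].
  - unfold inT. apply Rlt_le, Rdiv_lt_0_compat; auto.
  - apply Rgt_not_eq, Rdiv_lt_0_compat; auto.
  - apply hprod_const; [apply Rlt_le, Rdiv_lt_0_compat; auto| apply Hq|].
    intros [|[|i]].
    + rewrite E, E'. field; intro; lra.
    + field; intro; lra.
    + rewrite (H2 (S (S i))), (H2' (S (S i))) by lia. ring.
Qed.

Lemma ceq_same q q' x y : lin q -> lin q' -> q 0%nat = x * q 1%nat -> q' 0%nat = x * q' 1%nat ->
  ceq y q = ceq y q'.
Proof.
  intros Hq Hq' E E'. destruct (lin_facts q Hq) as [Hn [H1 H2]].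
  destruct (lin_facts q' Hq') as [Hn' [H1' H2']].
  unfold ceq. destruct (Req_dec_T (q 0%nat) (y * q 1%nat)) as [a|a];
  destruct (Req_dec_T (q' 0%nat) (y * q' 1%nat)) as [b|b]; auto; exfalso.
  - assert (x = y) by (apply (Rmult_eq_reg_r (q 1%nat)); lra). subst; lra.
  - assert (x = y) by (apply (Rmult_eq_reg_r (q' 1%nat)); lra). subst; lra.
Qed.

Lemma matching qs : forall qs', Forall lin qs -> Forall lin qs' ->
  (forall x, 0 <= x -> cnt (ceq x) qs = cnt (ceq x) qs') ->
  exists qs'', Permutation qs' qs'' /\ Forall2 assoc qs qs''.
Proof.
  induction qs as [|q t IH]; intros qs' Hl Hl' Hc.
  - destruct qs' as [|q' t'].
    + exists nil; auto.
    + exfalso. inversion Hl' as [|? ? Hq' _]; subst.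
      destruct (lin_facts q' Hq') as [Hn [H1 H2]].
      specialize (Hc (q' 0%nat / q' 1%nat)). simpl in Hc.
      unfold ceq at 1 in Hc. destruct (Req_dec_T (q' 0%nat) (q' 0%nat / q' 1%nat * q' 1%nat)) as [_|n].
      * assert (0 <= q' 0%nat / q' 1%nat) by (apply Rmult_le_pos; [apply Hn| apply Rlt_le, Rinv_0_lt_compat; auto]).
        specialize (Hc H); lia.
      * apply n; field; intro; lra.
  - inversion Hl as [|? ? Hq Ht]; subst.
    destruct (lin_facts q Hq) as [Hn [H1 H2]].
    set (x := q 0%nat / q 1%nat).
    assert (Ex : q 0%nat = x * q 1%nat) by (unfold x; field; intro; lra).
    assert (Hx : 0 <= x) by (apply Rmult_le_pos; [apply Hn| apply Rlt_le, Rinv_0_lt_compat; auto]).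
    assert (C := Hc x Hx). simpl in C.
    assert (E1 : ceq x q = 1%nat) by (unfold ceq; destruct Req_dec_T; auto; contradiction).
    destruct (cnt_split (ceq x) qs') as [l1 [q' [l2 [-> Hq']]]]; [lia|].
    assert (Hl12 : Forall lin (l1 ++ l2) /\ lin q').
    { apply Forall_app in Hl' as [A B]. inversion B; subst. split; auto. apply Forall_app; auto. }
    destruct Hl12 as [Hl12 Hlq'].
    assert (Ex' : q' 0%nat = x * q' 1%nat).
    { unfold ceq in Hq'. destruct Req_dec_T; auto. lia. }
    destruct (IH (l1 ++ l2) Ht Hl12) as [qs3 [P F]].
    + intros y Hy. specialize (Hc y Hy). simpl in Hc. rewrite cnt_app in Hc |- *. simpl in Hc.
      rewrite (ceq_same q q' x y) in Hc; auto. lia.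
    + exists (q' :: qs3). split.
      * eapply Permutation_trans; [apply Permutation_sym, Permutation_middle|]. constructor; auto.
      * constructor; auto. apply (lin_assoc q q' x); auto.
Qed.

Lemma zero_or_deg p : is_poly p -> (forall k, p k = 0) \/ exists d, has_deg p d.
Proof.
  intros Hp. destruct (Classical_Prop.classic (exists k, p k <> 0)) as [h|h].
  - right; apply deg_exists; auto.
  - left; intro k. destruct (Req_dec_T (p k) 0); auto. exfalso; apply h; eauto.
Qed.

Lemma part1 p : is_poly p -> (irreducible p <-> has_deg p 1%nat).
Proof.
  intros Hp. split.
  - intros [_ [[k [Hk1 Hk]] Hirr]].
    destruct (deg_exists p Hp (ex_intro _ k Hk)) as [d Hd].
    assert (Hkd := deg_ge p d k Hd Hk).
    destruct (Nat.eq_dec d 1) as [->|Hne]; auto. exfalso.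
    destruct (factor p d Hp Hd ltac:(lia)) as [L [q [PL [DL [Pq [Dq Hpr]]]]]].
    destruct (Hirr L q PL Pq Hpr) as [[a [Ha [Ha0 Hh]]]|[a [Ha [Ha0 Hh]]]].
    + apply (hprod_const_inv a L p Ha (poly_nonneg L PL)) with (i := d) in Hh.
      destruct Hd as [Hd _]. destruct DL as [_ DL]. rewrite DL in Hh by lia. apply Hd; rewrite Hh; ring.
    + apply (hprod_const_inv a q p Ha (poly_nonneg q Pq)) with (i := d) in Hh.
      destruct Hd as [Hd _]. destruct Dq as [_ Dq]. rewrite Dq in Hh by lia. apply Hd; rewrite Hh; ring.
  - intros Hd. split; [auto|]. split; [exists 1%nat; split; [lia| apply Hd]|].
    intros q1 q2 P1 P2 Hpr.
    assert (N1 := poly_nonneg q1 P1). assert (N2 := poly_nonneg q2 P2).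
    destruct (zero_or_deg q1 P1) as [Z|[d1 D1]].
    { exfalso. destruct Hd as [Hd _]. apply Hd. destruct Hpr as [_ Hpr].
      eapply hsum_zero; [|apply Hpr]. intros j _; simpl; rewrite Z; ring. }
    destruct (zero_or_deg q2 P2) as [Z|[d2 D2]].
    { exfalso. destruct Hd as [Hd _]. apply Hd. destruct Hpr as [_ Hpr].
      eapply hsum_zero; [|apply Hpr]. intros j _; simpl; rewrite Z; ring. }
    assert (E := deg_unique p _ _ Hd (hprod_deg q1 q2 p d1 d2 N1 N2 D1 D2 Hpr)).
    destruct Hpr as [_ Hs].
    destruct d1 as [|d1].
    + right. exists (q1 0%nat). destruct D1 as [D1a D1b].
      split; [apply N1|]. split; auto. apply hprod_const; auto.
      intro i. specialize (Hs i). apply (hsum_single _ _ _ 0) in Hs; [|lia|apply Rmult_le_pos; auto|].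
      * rewrite Hs, Nat.sub_0_r; auto.
      * intros k Hk Hk0. rewrite D1b by lia. ring.
    + assert (d2 = 0%nat) by lia. subst d2. left. exists (q2 0%nat). destruct D2 as [D2a D2b].
      split; [apply N2|]. split; auto. apply hprod_const; auto.
      intro i. specialize (Hs i). apply (hsum_single _ _ _ i) in Hs; [|lia|apply Rmult_le_pos; auto|].
      * rewrite Hs, Nat.sub_diag; ring.
      * intros k Hk Hk0. rewrite D2b by lia. ring.
Qed.

Lemma cnt_eq_all qs qs' p : Forall lin qs -> Forall lin qs' -> hprodn qs p -> hprodn qs' p ->
  forall x, 0 <= x -> cnt (ceq x) qs = cnt (ceq x) qs'.
Proof.
  intros L L' H H' x Hx. unfold hprodn in *.
  apply Forall_rev in L, L'.
  destruct (Rle_lt_or_eq_dec 0 x Hx) as [Hp|<-].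
  - destruct (iter_inv _ _ x Hp H L) as [_ [A [B _]]].
    destruct (iter_inv _ _ x Hp H' L') as [_ [A' [B' _]]].
    assert (E1 := maxidx_unique _ _ _ _ A A'). assert (E2 := minidx_unique _ _ _ _ B B').
    rewrite !cnt_rev in E1, E2.
    assert (S : forall l, cnt (cle x) l = (cnt (clt x) l + cnt (ceq x) l)%nat).
    { intro l. rewrite <- cnt_plus. apply cnt_ext. intro q. unfold cle, clt, ceq.
      destruct Rle_dec; destruct Rlt_dec; destruct Req_dec_T; simpl; auto; lra. }
    rewrite !S in E1. lia.
  - destruct (iter_inv _ _ 1 Rlt_0_1 H L) as [_ [_ [_ A]]].
    destruct (iter_inv _ _ 1 Rlt_0_1 H' L') as [_ [_ [_ A']]].
    assert (E := lowidx_unique _ _ _ A A'). rewrite !cnt_rev in E.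
    assert (S : forall l, cnt (ceq 0) l = cnt ce0 l).
    { intro l. apply cnt_ext. intro q. unfold ceq, ce0. rewrite Rmult_0_l. reflexivity. }
    rewrite !S. auto.
Qed.

Theorem mainTheorem5 :
  (forall p : nat -> R, is_poly p -> (irreducible p <-> has_deg p 1%nat)) /\
  unique_factorization.
Proof.
  split; [exact part1|].
  intros p qs qs' Hp _ _ I I' H H'.
  assert (L : Forall lin qs).
  { eapply Forall_impl; [|exact I]. intros q Hq. split; [apply Hq|]. apply part1; [apply Hq|auto]. }
  assert (L' : Forall lin qs').
  { eapply Forall_impl; [|exact I']. intros q Hq. split; [apply Hq|]. apply part1; [apply Hq|auto]. }
  destruct (matching qs qs' L L' (cnt_eq_all qs qs' p L L' H H')) as [qs'' [P F]].
  split; [|exists qs''; auto].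
  rewrite (Forall2_length F). symmetry; apply Permutation_length; auto.
Qed.
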